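(* Let $a,b$ be positive integers and $h(j)=aj+b$ for $j\ge0$, $h(j)=0$ for $j<0$. Then $$\operatorname{hdepth}(h)=\begin{cases}1,& a<b,\\ 2,& b\le a<2b,\\ 3,& 2b\le a<3b,\\ 4,& 3b\le a\le 4b,\\ 3,& a>4b.\end{cases}$$
   Context: For a nonzero function $h:\mathbb Z\to\mathbb Z_{\ge 0}$ with $h(j)=0$ for all sufficiently negative $j$, and integers $k\le d$, set $\beta_k^d(h)=\sum_{j\le k}(-1)^{k-j}\binom{d-j}{k-j}h(j)$, and $\operatorname{hdepth}(h)=\max\{d\in\mathbb Z:\ \beta_k^d(h)\ge 0\text{ for all integers }k\le d\}$. *)

(* Defs.v *)
From mathcomp Require Import all_boot all_order all_algebra.
Set Implicit Arguments. Unset Strict Implicit. Unset Printing Implicit Defensive.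
Import Order.TTheory GRing.Theory Num.Theory.
Local Open Scope ring_scope.

(* h : int -> int (values >= 0), vanishing below the integer L.
   beta L h k d = \sum_{L <= j <= k} (-1)^(k-j) * C(d-j, k-j) * h(j),
   which equals the paper's \sum_{j <= k} whenever h j = 0 for all j < L
   (and k <= d, so that d - j >= k - j >= 0 in the range). *)
Definition beta (L : int) (h : int -> int) (k d : int) : int :=
  if L <= k then
    \sum_(0 <= i < absz (k - L + 1))
      (let j := L + i%:Z in
       (-1) ^+ absz (k - j) * ('C(absz (d - j), absz (k - j)))%:Z * h j)
  else 0.

Definition beta_nonneg (L : int) (h : int -> int) (d : int) : Prop :=
  forall k : int, k <= d -> 0 <= beta L h k d.

Definition is_hdepth (L : int) (h : int -> int) (d : int) : Prop :=
  beta_nonneg L h d /\ forall d' : int, beta_nonneg L h d' -> d' <= d.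

Definition hlin (a b : nat) (j : int) : int :=
  if 0 <= j then a%:Z * j + b%:Z else 0.

(* Main.v *)
Require Import Defs.
From mathcomp Require Import all_boot all_order all_algebra zify ring lra.
Import Order.TTheory GRing.Theory Num.Theory.
Local Open Scope ring_scope.

Lemma betaE (h : int -> int) (n : nat) (d : int) :
  beta 0 h n d = \sum_(0 <= i < n.+1) ((-1) ^+ (n - i)%N * ('C(absz (d - i%:Z), (n - i)%N))%:Z * h i).
Proof.
rewrite /beta (_ : (0 <= n%:Z) = true) // subr0 (_ : n%:Z + 1 = n.+1%:Z); last by rewrite -addn1 PoszD.
apply: eq_big_nat => i /andP [_ Hi].
by rewrite add0r subzn.
Qed.

Lemma beta1 a b (m : nat) : beta 0 (hlin a b) 1 m = (a + b)%:Z - (m * b)%:Z.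
Proof.
rewrite betaE !big_nat_recr //= big_geq // add0r /hlin /=.
rewrite !subn0 subnn addn0 bin1 bin0 expr1 expr0.
lia.
Qed.
Lemma beta2 a b (m : nat) : (1 <= m)%N -> beta 0 (hlin a b) 2 m =
  ('C(m,2))%:Z * b%:Z - (m%:Z - 1) * (a%:Z + b%:Z) + (2 * a%:Z + b%:Z).
Proof.
move=> Hm.
rewrite betaE !big_nat_recr //= big_geq // add0r /hlin /=.
rewrite !subn0 subnn addn0 bin0 (_ : (1+1-1 = 1)%N) // bin1 expr1 expr0 (subzn Hm) (_ : (1+1 = 2)%N) // sqrrN expr1n.
rewrite -(subzn Hm).
lia.
Qed.

Lemma low (h : int -> int) (D : nat) (H : forall n : nat, (n <= D)%N -> 0 <= beta 0 h n D) :
  beta_nonneg 0 h D.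
Proof.
move=> [n|n] Hn; first by apply: H; rewrite -lez_nat.
by rewrite /beta.
Qed.

Lemma upp a b (D : nat) (HD : (1 <= D)%N)
  (H : forall m : nat, (D < m)%N -> 0 <= beta 0 (hlin a b) 1 m -> 0 <= beta 0 (hlin a b) 2 m -> False) :
  forall d', beta_nonneg 0 (hlin a b) d' -> d' <= D.
Proof.
move=> d' Hd; case: (lerP d' D) => // HD'; exfalso.
case: d' Hd HD' => [m|m] Hd HD'; last by [].
have Hm : (D < m)%N by rewrite -ltz_nat.
apply: (H m Hm); apply: Hd; rewrite lez_nat; lia.
Qed.

Lemma Cm2 (m : nat) : 2 * ('C(m,2))%:Z = m%:Z * (m%:Z - 1).
Proof.
have := mul_bin_left m 1; rewrite bin1 => E.
have -> : 2 * ('C(m,2))%:Z = (2 * 'C(m,2))%N%:Z by rewrite PoszM.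
rewrite E; case: m {E} => [|m] //=.
by rewrite PoszM subn1 /= mulrC -addn1 PoszD addrK.
Qed.

Lemma up2 a b (m : nat) : (0 < b)%N -> (4 <= m)%N -> (m = 4%N -> (4 * b < a)%N) ->
  0 <= beta 0 (hlin a b) 1 m -> 0 <= beta 0 (hlin a b) 2 m -> False.
Proof.
move=> hb Hm H4; rewrite beta1 beta2; last by lia.
move=> B1 B2.
have Hc := Cm2 m.
case: (ltnP 4 m) => Hm5.
  have P1 : 0 <= (m%:Z - 3) * ((a + b)%N%:Z - (m * b)%N%:Z).
    apply: mulr_ge0; lia.
  have P2 : 0 <= (m%:Z - 5) * (m * b)%N%:Z.
    apply: mulr_ge0; lia.
  nia.
have E : m = 4%N by lia.
move: (H4 E) B2 Hc; rewrite E => h4 B2 Hc; lia.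
Qed.

Ltac bcomp := rewrite betaE !big_nat_recr //= ?big_geq // ?add0r /hlin /binomial /= ?mulN1r ?mul1r.

Theorem theorem3p5 (a b : nat) (ha : (0 < a)%N) (hb : (0 < b)%N) :
  is_hdepth 0 (hlin a b)
    (if (a < b)%N then 1
     else if (a < 2 * b)%N then 2
     else if (a < 3 * b)%N then 3
     else if (a <= 4 * b)%N then 4
     else 3).
Proof.
case: (ltnP a b) => h1.
  split.
    apply: (@low _ 1) => n Hn.
    case: n Hn => [|[|n]] Hn //; bcomp; lia.
  apply: (@upp a b 1) => // m Hm; rewrite beta1 => B1 _; have := leq_mul Hm (leqnn b); lia.
case: (ltnP a (2*b)) => h2.
  split.
    apply: (@low _ 2) => n Hn.
    case: n Hn => [|[|[|n]]] Hn //; bcomp; lia.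
  apply: (@upp a b 2) => // m Hm; rewrite beta1 => B1 _; have := leq_mul Hm (leqnn b); lia.
case: (ltnP a (3*b)) => h3.
  split.
    apply: (@low _ 3) => n Hn.
    case: n Hn => [|[|[|[|n]]]] Hn //; bcomp; lia.
  apply: (@upp a b 3) => // m Hm; rewrite beta1 => B1 _; have := leq_mul Hm (leqnn b); lia.
case: (leqP a (4*b)) => h4.
  split.
    apply: (@low _ 4) => n Hn.
    case: n Hn => [|[|[|[|[|n]]]]] Hn //; bcomp; lia.
  apply: (@upp a b 4) => // m Hm; apply: up2 => //; lia.
split.
  apply: (@low _ 3) => n Hn.
  case: n Hn => [|[|[|[|n]]]] Hn //; bcomp; lia.
apply: (@upp a b 3) => // m Hm; apply: up2 => //; lia.
Qed.
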